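(* Fix $\beta\in(1,2)$ and let $Y=(Y_s)_{s\in\mathbb Z_{\ge0}}$ be the discrete-time random walk on the weighted graph described in the context, run in stationarity, and let $\mathcal C=\mathbb N^+=\{1,2,3,\dots\}$. Then $\mathbf P[Y_0\in\mathcal C]=1/2$ and, as $t\to\infty$, $$\mathbf P\big[Y_s\in\mathcal C\ \ \forall s\in\{0,1,\dots,t\}\big]=t^{\frac{1-\beta}{2}+o(1)}.$$
   Context: The graph has vertex set $\mathbb Z^*=\mathbb Z\setminus\{0\}$ and edges: nearest-neighbour edges $\{n,n+1\}$ and $\{-(n+1),-n\}$ for $n\ge1$, the edge $\{-1,1\}$, and a self-loop at every vertex. Conductances: $c_{n,n+1}=c_{-(n+1),-n}=n^{-\beta}$ for $n\ge1$; $c_{-1,1}=c_{1,1}=c_{-1,-1}=1/2$; and for $|n|\ge2$ the self-loop conductance is $c_{n,n}=c_{n,n-1}+c_{n,n+1}$ (conductance of the two edges at $n$). The walk moves from $x$ to $y$ with probability $c_{x,y}/\pi(x)$, where $\pi(x)=\sum_y c_{x,y}$ (self-loop counted once); $\pi$ has finite total mass and the walk is run started from the normalized $\pi$. $\mathbf P$ is the law of this stationary walk. *)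

(* Defs.v *)
From Stdlib Require Import Reals ZArith List Lra.
Import ListNotations.
Open Scope R_scope.

(* Vertices of Z^* = Z \ {0} are represented by integers (0 is never used:
   all conductances involving 0 vanish). *)

Definition edge_c (beta : R) (x y : Z) : R :=
  if ((1 <=? x)%Z && (y =? x + 1)%Z)%bool then Rpower (IZR x) (- beta)
  else if ((1 <=? y)%Z && (x =? y + 1)%Z)%bool then Rpower (IZR y) (- beta)
  else if ((x <=? -1)%Z && (y =? x - 1)%Z)%bool then Rpower (IZR (- x)) (- beta)
  else if ((y <=? -1)%Z && (x =? y - 1)%Z)%bool then Rpower (IZR (- y)) (- beta)
  else if (((x =? -1)%Z && (y =? 1)%Z) || ((x =? 1)%Z && (y =? -1)%Z))%bool then 1/2
  else 0.

Definition cond (beta : R) (x y : Z) : R :=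
  if (x =? 0)%Z then 0
  else if (y =? 0)%Z then 0
  else if (x =? y)%Z then
    (if ((x =? 1)%Z || (x =? -1)%Z)%bool then 1/2
     else edge_c beta x (x - 1) + edge_c beta x (x + 1))
  else edge_c beta x y.

(* The list of all neighbours y of x in Z^* (including x itself via the
   self-loop); every y outside this list has cond beta x y = 0. *)
Definition nbrs (x : Z) : list Z :=
  if (x =? 1)%Z then [-1; 1; 2]%Z
  else if (x =? -1)%Z then [-2; -1; 1]%Z
  else [x - 1; x; x + 1]%Z.

(* pi(x) = sum_y c_{x,y} (self-loop counted once). *)
Definition piw (beta : R) (x : Z) : R :=
  fold_right Rplus 0 (map (fun y => cond beta x y) (nbrs x)).

Definition trans (beta : R) (x y : Z) : R := cond beta x y / piw beta x.

Definition inC (x : Z) : bool := (1 <=? x)%Z.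

(* stay beta t x = P_x[ Y_s \in C for all s in {0,...,t} ]
   (probability for the walk started at x), via the Markov property:
   stay 0 x = 1_C(x), stay (t+1) x = 1_C(x) * sum_y p(x,y) stay t y. *)
Fixpoint stay (beta : R) (t : nat) (x : Z) : R :=
  match t with
  | O => if inC x then 1 else 0
  | S t' => if inC x then
              fold_right Rplus 0 (map (fun y => trans beta x y * stay beta t' y) (nbrs x))
            else 0
  end.

(* Total mass of pi over Z^*, enumerated as n+1 and -(n+1), n : nat. *)
Definition pi_pair (beta : R) (n : nat) : R :=
  piw beta (Z.of_nat n + 1)%Z + piw beta (- (Z.of_nat n + 1))%Z.

(* Main.v *)
Require Import Defs.
From Stdlib Require Import Reals ZArith List Lra Lia.
Import ListNotations.
Open Scope R_scope.
Ltac zsimpl := repeat match goal with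
 | |- context [Z.eqb ?a ?b] => destruct (Z.eqb_spec a b); try lia
 | |- context [Z.leb ?a ?b] => destruct (Z.leb_spec a b); try lia
 end; simpl.
Definition c b x := Rpower (IZR x) (- b).
Lemma c_pos b x : 0 < c b x.
Proof. unfold c, Rpower. apply exp_pos. Qed.
Lemma c_1 b : c b 1 = 1.
Proof. unfold c, Rpower. rewrite ln_1, Rmult_0_r. apply exp_0. Qed.

Lemma cond_ge2 b x : (2 <= x)%Z ->
  cond b x (x-1) = c b (x-1) /\ cond b x x = c b (x-1) + c b x /\ cond b x (x+1) = c b x.
Proof. intros H. unfold cond, edge_c, c. repeat split; zsimpl.
 all: try (f_equal; f_equal; lia). Qed.

Lemma nbrs_ge2 x : (2 <= x)%Z -> nbrs x = [x-1; x; x+1]%Z.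
Proof. intros H. unfold nbrs. zsimpl. reflexivity. Qed.

Lemma piw_ge2 b x : (2 <= x)%Z -> piw b x = 2 * (c b (x-1) + c b x).
Proof. intros H. unfold piw. rewrite nbrs_ge2 by lia. simpl.
 destruct (cond_ge2 b x H) as [E1 [E2 E3]]. rewrite E1, E2, E3. ring. Qed.

Lemma piw_1 b : piw b 1 = 2.
Proof. unfold piw, nbrs, cond, edge_c. simpl. change (Rpower 1 (- b)) with (c b 1). rewrite c_1. lra. Qed.

Lemma stay_nonpos b t x : (x <= 0)%Z -> stay b t x = 0.
Proof. intros H. destruct t; simpl; unfold inC; zsimpl; reflexivity. Qed.

Definition pm b x := c b (x-1) / (2 * (c b (x-1) + c b x)).
Definition pp b x := c b x / (2 * (c b (x-1) + c b x)).

Lemma pm_pp b x : pm b x + pp b x = /2.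
Proof. unfold pm, pp. pose proof (c_pos b (x-1)). pose proof (c_pos b x). field. lra. Qed.
Lemma pm_pos b x : 0 < pm b x.
Proof. unfold pm. pose proof (c_pos b (x-1)). pose proof (c_pos b x).
 apply Rdiv_lt_0_compat; lra. Qed.
Lemma pp_pos b x : 0 < pp b x.
Proof. unfold pp. pose proof (c_pos b (x-1)). pose proof (c_pos b x).
 apply Rdiv_lt_0_compat; lra. Qed.

Lemma stay_S_ge2 b t x : (2 <= x)%Z ->
  stay b (S t) x = pm b x * stay b t (x-1) + /2 * stay b t x + pp b x * stay b t (x+1).
Proof. intros H. simpl. unfold inC. zsimpl. rewrite nbrs_ge2 by lia. simpl.
 unfold trans. destruct (cond_ge2 b x H) as [E1 [E2 E3]]. rewrite E1, E2, E3, piw_ge2 by lia.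
 unfold pm, pp. pose proof (c_pos b (x-1)). pose proof (c_pos b x). field. lra. Qed.

Lemma stay_S_1 b t : stay b (S t) 1 = /4 * stay b t 1 + /2 * stay b t 2.
Proof. simpl stay at 1. unfold inC. simpl. unfold trans. rewrite piw_1.
 unfold nbrs. simpl. rewrite (stay_nonpos b t (-1)) by lia.
 unfold cond, edge_c; simpl. change (Rpower 1 (- b)) with (c b 1). rewrite c_1. field. Qed.

Lemma stay_bounds b t : forall x, 0 <= stay b t x <= 1.
Proof. induction t; intros x.
 - simpl. destruct (inC x); lra.
 - destruct (Z_lt_le_dec x 1).
   + rewrite stay_nonpos by lia. lra.
   + destruct (Z.eq_dec x 1) as [->|Hn].
     * rewrite stay_S_1. pose proof (IHt 1%Z). pose proof (IHt 2%Z). lra.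
     * rewrite stay_S_ge2 by lia. pose proof (pm_pp b x). pose proof (pm_pos b x).
       pose proof (pp_pos b x). pose proof (IHt (x-1)%Z). pose proof (IHt x). pose proof (IHt (x+1)%Z).
       nra.
Qed.
Lemma ln_le_x1 y : 0 < y -> ln y <= y - 1.
Proof. intros H. pose proof (exp_ineq1_le (ln y)). rewrite exp_ln in H0 by lra. lra. Qed.
Lemma exp_le x y : x <= y -> exp x <= exp y.
Proof. intros [H|H]. left; apply exp_increasing; auto. subst; lra. Qed.
Lemma Rpower_pos x y : 0 < Rpower x y.
Proof. apply exp_pos. Qed.

Lemma c_ratio b x : (2 <= x)%Z ->
  c b x = c b (x-1) * Rpower ((IZR x - 1)/IZR x) b.
Proof. intros H. assert (HX: 2 <= IZR x) by (apply IZR_le; lia).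
 unfold c. rewrite minus_IZR. rewrite !Rpower_Ropp.
 replace (IZR x - 1) with (IZR x * ((IZR x - 1)/IZR x)) at 1 by (field; lra).
 rewrite <- Rpower_mult_distr by (try apply Rdiv_lt_0_compat; lra).
 pose proof (Rpower_pos (IZR x) b). pose proof (Rpower_pos ((IZR x - 1)/IZR x) b).
 field. split; lra. Qed.

Lemma Rpower_ge_sq q b : 0 < q <= 1 -> b <= 2 -> q * q <= Rpower q b.
Proof. intros Hq Hb. replace (q*q) with (Rpower q 2).
 2:{ replace 2 with (INR 2) by (simpl; lra). rewrite Rpower_pow by lra. simpl; ring. }
 unfold Rpower. apply exp_le. assert (ln q <= 0).
 { pose proof (ln_le_x1 q). lra. } nra. Qed.
Lemma Rpower_le1 q b : 0 < q <= 1 -> 0 <= b -> Rpower q b <= 1.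
Proof. intros Hq Hb. unfold Rpower. rewrite <- exp_0. apply exp_le.
 pose proof (ln_le_x1 q). nra. Qed.
Lemma Rpower_conc q s : 0 < q -> 0 <= s -> Rpower q s * (1 + s*(1-q)) <= 1.
Proof. intros Hq Hs. unfold Rpower.
 assert (s * ln q <= - (s*(1-q))) by (pose proof (ln_le_x1 q); nra).
 pose proof (exp_ineq1_le (s*(1-q))).
 apply exp_le in H. pose proof (exp_pos (s * ln q)).
 assert (exp (- (s*(1-q))) * exp (s*(1-q)) = 1) by (rewrite <- exp_plus; replace (- (s * (1 - q)) + s * (1 - q)) with 0 by ring; apply exp_0).
 pose proof (exp_pos (- (s*(1-q)))).
 destruct (Rle_lt_dec 0 (1 + s*(1-q))).
 - apply Rle_trans with (exp (- (s * (1 - q))) * (1 + s*(1-q))). apply Rmult_le_compat_r; lra.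
   apply Rle_trans with (exp (- (s * (1 - q))) * exp (s*(1-q))). apply Rmult_le_compat_l; lra. lra.
 - nra. Qed.
Lemma Rpower_conv q s : 0 < q -> 0 <= s -> 1 + s*(1-q) <= Rpower q (-s).
Proof. intros Hq Hs. unfold Rpower. eapply Rle_trans. 2: apply exp_ineq1_le.
 pose proof (ln_le_x1 q). nra. Qed.

Section Ineqs.
Variable b : R.
Hypothesis hb : 1 < b < 2.

Lemma q_bounds x : (2 <= x)%Z -> /2 <= (IZR x - 1)/IZR x <= 1 /\ 0 < (IZR x - 1)/IZR x.
Proof. intros H. assert (HX: 2 <= IZR x) by (apply IZR_le; lia).
 split; [split|]. apply Rmult_le_reg_r with (IZR x). lra. unfold Rdiv. rewrite Rmult_assoc, Rinv_l by lra. lra.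
 apply Rmult_le_reg_r with (IZR x). lra. unfold Rdiv. rewrite Rmult_assoc, Rinv_l by lra. lra.
 apply Rdiv_lt_0_compat; lra. Qed.

Lemma cL1 x : (2 <= x)%Z -> (IZR x - 2)/IZR x * c b (x-1) <= c b x.
Proof. intros H. assert (HX: 2 <= IZR x) by (apply IZR_le; lia).
 destruct (q_bounds x H) as [[Hq1 Hq2] Hq3].
 rewrite (c_ratio b x H). pose proof (Rpower_ge_sq ((IZR x - 1)/IZR x) b (conj Hq3 Hq2) ltac:(lra)).
 pose proof (c_pos b (x-1)). rewrite Rmult_comm. apply Rmult_le_compat_l. lra.
 eapply Rle_trans; [|exact H0].
 replace ((IZR x - 1) / IZR x * ((IZR x - 1) / IZR x)) with ((IZR x - 2)/IZR x + / (IZR x * IZR x)) by (field; lra).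
 assert (0 < / (IZR x * IZR x)) by (apply Rinv_0_lt_compat; nra). lra. Qed.

Lemma cL2 x : (2 <= x)%Z -> c b x * (IZR x + (b-1)) <= c b (x-1) * (IZR x - 1).
Proof. intros H. assert (HX: 2 <= IZR x) by (apply IZR_le; lia).
 destruct (q_bounds x H) as [[Hq1 Hq2] Hq3]. set (q := (IZR x - 1)/IZR x) in *.
 rewrite (c_ratio b x H). fold q. replace (Rpower q b) with (q * Rpower q (b-1)).
 2:{ replace b with (1 + (b-1)) at 2 by ring. rewrite Rpower_plus, Rpower_1 by lra. reflexivity. }
 pose proof (Rpower_conc q (b-1) Hq3 ltac:(lra)).
 assert (1 - q = / IZR x) by (unfold q; field; lra).
 rewrite H1 in H0. pose proof (c_pos b (x-1)). pose proof (Rpower_pos q (b-1)).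
 assert (Rpower q (b-1) * (IZR x + (b-1)) <= IZR x).
 { replace (IZR x + (b-1)) with (IZR x * (1 + (b-1) * / IZR x)) by (field; lra). nra. }
 assert (q * IZR x = IZR x - 1) by (unfold q; field; lra).
 rewrite <- H5. replace (c b (x - 1) * (q * Rpower q (b - 1)) * (IZR x + (b - 1))) with ((c b (x-1) * q) * (Rpower q (b - 1) * (IZR x + (b - 1)))) by ring.
 replace (c b (x - 1) * (q * IZR x)) with ((c b (x-1) * q) * IZR x) by ring.
 apply Rmult_le_compat_l; [nra|lra]. Qed.

Lemma cL3 x : (2 <= x)%Z -> c b x <= c b (x-1).
Proof. intros H. destruct (q_bounds x H) as [[Hq1 Hq2] Hq3].
 rewrite (c_ratio b x H). pose proof (Rpower_le1 _ b (conj Hq3 Hq2) ltac:(lra)).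
 pose proof (c_pos b (x-1)). nra. Qed.

Lemma cL4 x : (2 <= x)%Z -> c b (x-1) <= 4 * c b x.
Proof. intros H. destruct (q_bounds x H) as [[Hq1 Hq2] Hq3].
 rewrite (c_ratio b x H). pose proof (Rpower_ge_sq _ b (conj Hq3 Hq2) ltac:(lra)).
 pose proof (c_pos b (x-1)). set (q := (IZR x - 1) / IZR x) in *.
 assert (/4 <= Rpower q b) by nra. nra. Qed.

Definition F y := Rpower (IZR y) (1 - b).

Lemma F_pos y : 0 < F y.
Proof. apply Rpower_pos. Qed.

Lemma cTail y : (2 <= y)%Z -> (b - 1) * c b y <= F (y-1) - F y.
Proof. intros H. assert (HX: 2 <= IZR y) by (apply IZR_le; lia).
 destruct (q_bounds y H) as [[Hq1 Hq2] Hq3]. set (q := (IZR y - 1)/IZR y) in *.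
 unfold F, c. rewrite minus_IZR.
 replace (IZR y - 1) with (IZR y * q) by (unfold q; field; lra).
 rewrite <- Rpower_mult_distr by lra.
 replace (1 - b) with (- (b-1)) at 2 by ring.
 pose proof (Rpower_conv q (b-1) Hq3 ltac:(lra)).
 assert (1 - q = / IZR y) by (unfold q; field; lra). rewrite H1 in H0.
 assert (Rpower (IZR y) (- b) = Rpower (IZR y) (1 - b) * / IZR y).
 { replace (- b) with ((1-b) + (- (1))) by ring. rewrite Rpower_plus, Rpower_Ropp, Rpower_1 by lra. reflexivity. }
 rewrite H2. pose proof (Rpower_pos (IZR y) (1-b)).
 set (P := Rpower (IZR y) (1 - b)) in *. set (R0 := Rpower q (- (b - 1))) in *.
 replace ((b - 1) * (P * / IZR y)) with (P * ((b-1) * / IZR y)) by ring.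
 replace (P * R0 - P) with (P * (R0 - 1)) by ring.
 apply Rmult_le_compat_l; lra. Qed.

Lemma cMid x M : (1 <= x)%Z -> IZR x <= M -> IZR x * IZR x * c b x <= Rpower M (2 - b).
Proof. intros H HM. assert (HX: 1 <= IZR x) by (apply IZR_le; lia).
 unfold c. replace (IZR x * IZR x) with (Rpower (IZR x) 2).
 2:{ replace 2 with (INR 2) by (simpl; lra). rewrite Rpower_pow by lra. simpl; ring. }
 rewrite <- Rpower_plus. replace (2 + - b) with (2 - b) by ring.
 apply Rle_Rpower_l; lra. Qed.

End Ineqs.

Lemma div_nonneg a b : 0 <= a -> 0 < b -> 0 <= a / b.
Proof. intros; unfold Rdiv; apply Rmult_le_pos; [|left; apply Rinv_0_lt_compat]; auto. Qed.

Lemma lower_key b (hb : 1 < b < 2) x K : (2 <= x)%Z -> 1 <= K -> K < IZR x ->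
  K * (pm b x / (IZR x - 1) + /2 / IZR x + pp b x / (IZR x + 1)) <= K / IZR x + 4 / (K*K).
Proof. intros Hx HK HKX. assert (HX: 2 <= IZR x) by (apply IZR_le; lia).
 pose proof (cL1 b hb x Hx) as HB. pose proof (c_pos b (x-1)). pose proof (c_pos b x).
 set (A := c b (x-1)) in *. set (B := c b x) in *. set (X := IZR x) in *.
 assert (HB' : (X-2) * A <= X * B).
 { apply Rmult_le_compat_l with (r := X) in HB; [|lra].
   replace (X * ((X - 2) / X * A)) with ((X-2)*A) in HB by (field; lra). lra. }
 assert (HN : A*(X+1) - B*(X-1) <= 4 * A).
 { apply Rmult_le_reg_r with X. lra. nra. }
 assert (E : pm b x / (X - 1) + /2 / X + pp b x / (X + 1) =
            / X + (A*(X+1) - B*(X-1)) / (2*(A+B)*X*(X*X-1))).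
 { unfold pm, pp. fold A B X. field. repeat split; nra. }
 rewrite E. clear E.
 assert (HP : 0 < 2*(A+B)*X*(X*X-1)) by (repeat apply Rmult_lt_0_compat; nra).
 assert (HD : (A*(X+1) - B*(X-1)) / (2*(A+B)*X*(X*X-1)) <= 2 / (X*(X*X-1))).
 { unfold Rdiv. apply Rle_trans with (4*(A+B) * / (2 * (A + B) * X * (X * X - 1))).
   - apply Rmult_le_compat_r. left; apply Rinv_0_lt_compat; exact HP. lra.
   - right. field. repeat split; nra. }
 assert (HF : K * (2 / (X*(X*X-1))) <= 4 / (K*K)).
 { assert (0 < X*(X*X-1)) by nra.
   replace (K * (2 / (X * (X * X - 1)))) with (2*K / (X*(X*X-1))) by (field; split; nra).
   replace (2*K / (X*(X*X-1))) with (4*K / (2*(X*(X*X-1)))) by (field; split; nra).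
   apply Rle_trans with (4*K / (K*K*K)).
   - unfold Rdiv. apply Rmult_le_compat_l. lra. apply Rinv_le_contravar. nra.
     pose proof (pow_incr K X 3 ltac:(lra)). simpl in H2. nra.
   - right. field. lra. }
 assert (0 < K) by lra.
 replace (K * (/ X + (A * (X + 1) - B * (X - 1)) / (2 * (A + B) * X * (X * X - 1))))
   with (K / X + K * ((A * (X + 1) - B * (X - 1)) / (2 * (A + B) * X * (X * X - 1)))) by (field; repeat split; nra).
 apply Rplus_le_compat_l. eapply Rle_trans; [|exact HF]. apply Rmult_le_compat_l; lra.
Qed.

Lemma lower_sup b (hb : 1 < b < 2) K (HK : 1 <= K) :
  forall t x, (1 <= x)%Z -> 1 - stay b t x <= K / IZR x + 4 * INR t / (K*K).
Proof. induction t; intros x Hx.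
 - simpl. unfold inC. replace ((1 <=? x)%Z) with true by (symmetry; apply Z.leb_le; lia).
   assert (0 < IZR x) by (apply IZR_lt; lia).
   assert (0 <= K / IZR x) by (apply div_nonneg; lra).
   assert (0 <= 4 * 0 / (K*K)) by (unfold Rdiv; rewrite Rmult_0_r, Rmult_0_l; lra). lra.
 - assert (HX : 1 <= IZR x) by (apply IZR_le; lia).
   assert (0 < K*K) by nra.
   rewrite S_INR.
   destruct (Rle_lt_dec 1 (K / IZR x + 4 * (INR t + 1) / (K*K))) as [Hc|Hc].
   { pose proof (stay_bounds b (S t) x). lra. }
   assert (H4 : 0 <= 4 * INR t / (K*K)) by (apply div_nonneg; [pose proof (pos_INR t)|]; lra).
   assert (H5 : 0 <= 4 * (INR t + 1) / (K*K)) by (apply div_nonneg; [pose proof (pos_INR t)|]; lra).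
   assert (HKX : K < IZR x).
   { assert (K / IZR x < 1) by lra.
     apply Rmult_lt_compat_r with (r := IZR x) in H0; [|lra].
     unfold Rdiv in H0. rewrite Rmult_assoc, Rinv_l, Rmult_1_r in H0 by lra. lra. }
   assert (Hx2 : (2 <= x)%Z).
   { assert (1 < IZR x) by lra. apply lt_IZR in H0. lia. }
   rewrite stay_S_ge2 by lia.
   pose proof (IHt (x-1)%Z ltac:(lia)) as I1. pose proof (IHt x Hx) as I2.
   pose proof (IHt (x+1)%Z ltac:(lia)) as I3.
   rewrite minus_IZR in I1. rewrite plus_IZR in I3.
   pose proof (lower_key b hb x K Hx2 HK HKX) as LK.
   pose proof (pm_pp b x). pose proof (pm_pos b x). pose proof (pp_pos b x).
   set (e := 4 * INR t / (K*K)) in *.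
   replace (4 * (INR t + 1) / (K*K)) with (e + 4/(K*K)) by (unfold e; field; lra).
   set (s1 := stay b t (x-1)) in *. set (s0 := stay b t x) in *. set (s2 := stay b t (x+1)) in *.
   set (a := pm b x) in *. set (c0 := pp b x) in *. set (X := IZR x) in *.
   assert (Hexp : 1 - (a * s1 + / 2 * s0 + c0 * s2) = a * (1 - s1) + /2 * (1 - s0) + c0 * (1 - s2)).
   { replace 1 with (a + /2 + c0) at 1 by lra. ring. }
   rewrite Hexp.
   apply Rle_trans with (a * (K / (X-1) + e) + /2 * (K / X + e) + c0 * (K/(X+1) + e)).
   { apply Rplus_le_compat; [apply Rplus_le_compat|]; apply Rmult_le_compat_l; lra. }
   replace (a * (K / (X-1) + e) + /2 * (K / X + e) + c0 * (K/(X+1) + e))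
     with (e * (a + /2 + c0) + K * (a / (X - 1) + /2 / X + c0 / (X + 1))) by (field; lra).
   replace (a + /2 + c0) with 1 by lra. lra.
Qed.

Lemma bern y k : 0 <= y <= 1 -> 1 - INR k * y <= (1 - y) ^ k.
Proof. intros Hy. induction k. simpl; lra. rewrite S_INR. simpl.
 assert (0 <= (1-y)^k) by (apply pow_le; lra).
 assert (0 <= INR k) by apply pos_INR. nra. Qed.

Definition fq x := IZR x * IZR x + 6.

Lemma Pf_ge2 b (hb : 1 < b < 2) x : (2 <= x)%Z ->
  pm b x * fq (x-1) + /2 * fq x + pp b x * fq (x+1) <= fq x - (b-1)/4.
Proof. intros Hx. assert (HX: 2 <= IZR x) by (apply IZR_le; lia).
 pose proof (cL2 b hb x Hx) as HB. pose proof (c_pos b (x-1)). pose proof (c_pos b x).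
 unfold fq, pm, pp. rewrite minus_IZR, plus_IZR.
 set (A := c b (x-1)) in *. set (B := c b x) in *. set (X := IZR x) in *.
 set (s := b - 1).
 assert (Hk : B * (2*X + 1 + s/2) <= A * (2*X - 1 - s/2)).
 { apply Rmult_le_reg_l with (X - 1). lra.
   assert (0 <= B * (s*X - s/2 - s*s/2 + 1)) by (apply Rmult_le_pos; unfold s in *; nra).
   assert ((X-1) * (A * (2*X - 1 - s/2)) >= B*(X+s)*(2*X-1-s/2)).
   { replace ((X-1) * (A * (2*X - 1 - s/2))) with ((A*(X-1)) * (2*X-1-s/2)) by ring.
     apply Rle_ge. apply Rmult_le_compat_r. unfold s in *; lra. fold s in HB. lra. }
   nra. }
 assert (HAB : 0 < A + B) by lra.
 apply Rmult_le_reg_r with (2*(A+B)). lra.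
 replace ((A / (2 * (A + B)) * ((X - 1) * (X - 1) + 6) + / 2 * (X * X + 6) +
   B / (2 * (A + B)) * ((X + 1) * (X + 1) + 6)) * (2 * (A + B)))
   with (A * ((X - 1) * (X - 1) + 6) + (A+B) * (X * X + 6) + B * ((X + 1) * (X + 1) + 6)) by (field; lra).
 unfold s in *. nra. Qed.

Lemma bt_step k eta t : (1 <= k)%nat -> 0 < eta ->
  (1 - eta) * (INR k / (INR k + eta * INR t)) ^ k <= (INR k / (INR k + eta * INR (S t))) ^ k.
Proof. intros Hk He. rewrite S_INR.
 assert (HK : 1 <= INR k) by (apply (le_INR 1); auto).
 pose proof (pos_INR t).
 set (u := INR k + eta * INR t).
 assert (Hu : INR k <= u) by (unfold u; nra).
 replace (INR k / (INR k + eta * (INR t + 1))) with ((INR k / u) * (1 - eta / (u + eta))).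
 2:{ unfold u. field. nra. }
 rewrite Rpow_mult_distr.
 assert (0 <= (INR k / u) ^ k) by (apply pow_le; apply div_nonneg; lra).
 assert (1 - eta <= (1 - eta / (u + eta)) ^ k).
 { eapply Rle_trans; [|apply bern].
   - assert (INR k * (eta / (u+eta)) <= eta).
     { unfold Rdiv. rewrite <- Rmult_assoc. apply Rmult_le_reg_r with (u + eta). lra.
       rewrite Rmult_assoc, Rinv_l, Rmult_1_r by lra. nra. }
     lra.
   - split. apply div_nonneg; lra. unfold Rdiv. apply Rmult_le_reg_r with (u+eta). lra.
     rewrite Rmult_assoc, Rinv_l by lra. lra. }
 rewrite Rmult_comm. apply Rmult_le_compat_l; lra. Qed.

Definition Bt k eta t := /7 * (INR k / (INR k + eta * INR t)) ^ k.

Lemma Bt_nonneg k eta t : (1 <= k)%nat -> 0 <= eta -> 0 <= Bt k eta t.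
Proof. intros Hk He. unfold Bt. assert (1 <= INR k) by (apply (le_INR 1); auto).
 pose proof (pos_INR t). apply Rmult_le_pos. lra. apply pow_le. apply div_nonneg; nra. Qed.

Lemma upper_sup b (hb : 1 < b < 2) F0 k (HF : 1 <= F0) (Hk : (1 <= k)%nat) :
  forall t x, (1 <= x)%Z -> stay b t x <= fq x * (/F0 + Bt k ((b-1)/4/F0) t).
Proof.
 set (d := (b-1)/4). set (eta := d / F0).
 assert (Hd : 0 < d) by (unfold d; lra).
 assert (He : 0 < eta) by (unfold eta; apply Rdiv_lt_0_compat; lra).
 assert (HiF : 0 < /F0) by (apply Rinv_0_lt_compat; lra).
 induction t; intros x Hx.
 - simpl. unfold inC. replace ((1 <=? x)%Z) with true by (symmetry; apply Z.leb_le; lia).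
   unfold Bt. simpl INR. rewrite Rmult_0_r, Rplus_0_r.
   assert (1 <= INR k) by (apply (le_INR 1); auto).
   replace (INR k / INR k) with 1 by (field; lra). rewrite pow1.
   assert (1 <= IZR x) by (apply IZR_le; lia). unfold fq. nra.
 - pose proof (Bt_nonneg k eta t Hk ltac:(lra)) as HB0.
   pose proof (Bt_nonneg k eta (S t) Hk ltac:(lra)) as HB1.
   fold d eta in IHt |- *.
   assert (Hf7 : 7 <= fq x) by (unfold fq; assert (1 <= IZR x) by (apply IZR_le; lia); nra).
   destruct (Rle_lt_dec 1 (fq x * (/ F0 + Bt k eta (S t)))) as [Hc|Hc].
   { pose proof (stay_bounds b (S t) x). lra. }
   assert (HfF : fq x < F0).
   { assert (fq x * /F0 < 1) by nra.
     apply Rmult_lt_compat_r with (r := F0) in H; [|lra].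
     rewrite Rmult_assoc, Rinv_l, Rmult_1_r in H by lra. lra. }
   set (G := / F0 + Bt k eta t).
   assert (HG : 0 <= G) by (unfold G; lra).
   assert (Hst : stay b (S t) x <= (fq x - d) * G).
   { destruct (Z.eq_dec x 1) as [->|Hn].
     - rewrite stay_S_1. pose proof (IHt 1%Z ltac:(lia)). pose proof (IHt 2%Z ltac:(lia)).
       fold G in H, H0. unfold fq in *. simpl IZR in *.
       assert (d <= /4) by (unfold d; lra). nra.
     - assert (H2 : (2 <= x)%Z) by lia. rewrite stay_S_ge2 by exact H2.
       pose proof (IHt (x-1)%Z ltac:(lia)) as I1. pose proof (IHt x Hx) as I2.
       pose proof (IHt (x+1)%Z ltac:(lia)) as I3. fold G in I1, I2, I3.
       pose proof (Pf_ge2 b hb x H2) as HP. fold d in HP.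
       pose proof (pm_pos b x). pose proof (pp_pos b x).
       apply Rle_trans with ((pm b x * fq (x - 1) + / 2 * fq x + pp b x * fq (x + 1)) * G).
       + rewrite !Rmult_plus_distr_r. rewrite !Rmult_assoc.
         apply Rplus_le_compat; [apply Rplus_le_compat|]; apply Rmult_le_compat_l; lra.
       + apply Rmult_le_compat_r; lra. }
   assert (Hstep : (1 - eta) * Bt k eta t <= Bt k eta (S t)).
   { unfold Bt. pose proof (bt_step k eta t Hk He). nra. }
   assert (fq x - d <= fq x * (1 - eta)).
   { unfold eta. assert (fq x * (d / F0) <= d).
     { unfold Rdiv. rewrite <- Rmult_assoc. apply Rmult_le_reg_r with F0. lra.
       rewrite Rmult_assoc, Rinv_l by lra. nra. }
     lra. }
   apply Rle_trans with (fq x * (1 - eta) * G). { eapply Rle_trans. exact Hst. apply Rmult_le_compat_r; lra. }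
   assert (HiF1 : /F0 <= 1) by (rewrite <- Rinv_1; apply Rinv_le_contravar; lra).
   assert (Heta : eta <= d) by (unfold eta, Rdiv; nra).
   assert (d < 1) by (unfold d; lra).
   unfold G. assert (0 <= (1-eta) * /F0 <= /F0) by (split; nra).
   assert (HEq : fq x * (1 - eta) * (/ F0 + Bt k eta t) = fq x * ((1-eta) * /F0 + (1-eta) * Bt k eta t)) by ring.
   rewrite HEq. apply Rmult_le_compat_l. lra. lra.
Qed.

Lemma sum_split a m N : sum_f_R0 a (S (m+N)) = sum_f_R0 a m + sum_f_R0 (fun j => a (S m + j)%nat) N.
Proof. induction N. simpl. rewrite Nat.add_0_r. reflexivity.
 replace (S (m + S N)) with (S (S (m+N))) by lia.
 change (sum_f_R0 a (S (S (m+N)))) with (sum_f_R0 a (S (m+N)) + a (S (S (m+N)))). rewrite IHN.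
 change (sum_f_R0 (fun j => a (S m + j)%nat) (S N)) with (sum_f_R0 (fun j => a (S m + j)%nat) N + a (S m + S N)%nat).
 replace (S m + S N)%nat with (S (S (m + N))) by lia. ring. Qed.

Lemma sum_nonneg a N : (forall n, 0 <= a n) -> 0 <= sum_f_R0 a N.
Proof. intros H. induction N; simpl. apply H. pose proof (H (S N)). lra. Qed.

Lemma sum_mono a N1 N2 : (forall n, 0 <= a n) -> (N1 <= N2)%nat -> sum_f_R0 a N1 <= sum_f_R0 a N2.
Proof. intros H Hle. induction Hle. lra. simpl. pose proof (H (S m)). lra. Qed.

Lemma tele_sum a D m N : (forall j, a (m + j)%nat <= D (m + j)%nat - D (S (m + j))) ->
  sum_f_R0 (fun j => a (m + j)%nat) N <= D m - D (S (m + N)).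
Proof. intros H. induction N; simpl.
 - pose proof (H 0%nat). rewrite Nat.add_0_r in *. lra.
 - pose proof (H (S N)). replace (m + S N)%nat with (S (m+N)) in * by lia. lra. Qed.

Lemma bound_tail a D m : (forall n, 0 <= a n) -> (forall n, 0 <= D n) ->
  (forall n, (S m <= n)%nat -> a n <= D n - D (S n)) ->
  forall N, sum_f_R0 a N <= sum_f_R0 a m + D (S m).
Proof. intros Ha HD H N. destruct (le_lt_dec N m).
 - pose proof (sum_mono a N m Ha l). pose proof (HD (S m)). lra.
 - replace N with (S (m + (N - S m))) by lia. rewrite sum_split.
   pose proof (tele_sum a D (S m) (N - S m)). 
   assert (sum_f_R0 (fun j => a (S m + j)%nat) (N - S m) <= D (S m) - D (S (S m + (N - S m)))).
   { apply H0. intros j. apply H. lia. }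
   pose proof (HD (S (S m + (N - S m)))). lra. Qed.

Lemma sum_const_bound a m K : (forall n, (n <= m)%nat -> a n <= K) -> sum_f_R0 a m <= INR (S m) * K.
Proof. intros H. induction m. simpl. pose proof (H 0%nat (le_n 0)). lra.
 simpl sum_f_R0. rewrite S_INR. rewrite (S_INR m) in IHm.
 assert (sum_f_R0 a m <= (INR m + 1) * K) by (apply IHm; intros; apply H; lia).
 pose proof (H (S m) (le_n _)). rewrite S_INR. lra. Qed.

Lemma lim_le u l B : Un_cv u l -> (forall n, u n <= B) -> l <= B.
Proof. intros Hu HB. destruct (Rle_lt_dec l B); auto.
 destruct (Hu (l - B)) as [N HN]. lra. specialize (HN N (le_n _)). specialize (HB N).
 unfold Rdist in HN. apply Rabs_def2 in HN. lra. Qed.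

Lemma lim_ge u l n : Un_cv u l -> (forall m, u m <= u (S m)) -> u n <= l.
Proof. intros Hu Hg. destruct (Rle_lt_dec (u n) l); auto.
 destruct (Hu (u n - l)) as [N HN]. lra. specialize (HN (N + n)%nat ltac:(lia)).
 assert (u n <= u (N + n)%nat).
 { clear HN. induction N. simpl; lra. simpl. eapply Rle_trans. exact IHN. apply Hg. }
 unfold Rdist in HN. apply Rabs_def2 in HN. lra. Qed.

Lemma cv_scal u l k : Un_cv u l -> Un_cv (fun n => k * u n) (k * l).
Proof. intros H. apply (CV_mult (fun _ => k) u k l); auto.
 intros e He. exists 0%nat. intros. unfold Rdist. rewrite Rminus_diag, Rabs_R0. lra. Qed.

Lemma floor_ex w : 0 <= w -> exists m : nat, INR m <= w < INR m + 1.
Proof. intros Hw. destruct (INR_unbounded w) as [n Hn]. induction n.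
 - simpl in Hn. lra.
 - destruct (Rle_lt_dec (INR n) w). exists n. rewrite S_INR in Hn. lra. apply IHn. lra. Qed.

Lemma Rpower_big C e : 0 < e -> exists T : nat, forall t : nat, (T <= t)%nat -> C <= Rpower (INR t) e.
Proof. intros He. destruct (INR_unbounded (Rpower (Rabs C + 1) (/e))) as [T HT].
 exists T. intros t Ht. apply le_INR in Ht.
 assert (0 < Rpower (Rabs C + 1) (/ e)) by apply exp_pos.
 apply Rle_trans with (Rpower (Rpower (Rabs C + 1) (/ e)) e).
 - rewrite Rpower_mult. replace (/e * e) with 1 by (field; lra). rewrite Rpower_1.
   pose proof (Rle_abs C). lra. pose proof (Rabs_pos C). lra.
 - apply Rle_Rpower_l. lra. lra. Qed.

Lemma piw_neg_ge2 b x : (2 <= x)%Z -> piw b (-x) = 2 * (c b (x-1) + c b x).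
Proof. intros H. unfold piw, nbrs. zsimpl. unfold cond, edge_c, c. zsimpl.
 all: (try replace (- - x)%Z with x by lia); (try replace (- (- x + 1))%Z with (x-1)%Z by lia); ring. Qed.

Lemma piw_neg_1 b : piw b (-1) = 2.
Proof. unfold piw, nbrs, cond, edge_c. simpl. change (Rpower 1 (- b)) with (c b 1). rewrite c_1. lra. Qed.

Definition pv b n := piw b (Z.of_nat n + 1).

Lemma pv_eq b n : (1 <= n)%nat -> pv b n = 2 * (c b (Z.of_nat n) + c b (Z.of_nat n + 1)).
Proof. intros H. unfold pv. rewrite piw_ge2 by lia. replace (Z.of_nat n + 1 - 1)%Z with (Z.of_nat n) by lia. reflexivity. Qed.

Lemma pv_0 b : pv b 0 = 2.
Proof. apply piw_1. Qed.

Lemma piw_neg_pv b n : piw b (- (Z.of_nat n + 1)) = pv b n.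
Proof. destruct n. simpl. rewrite pv_0. apply piw_neg_1.
 rewrite pv_eq by lia. rewrite piw_neg_ge2 by lia. replace (Z.of_nat (S n) + 1 - 1)%Z with (Z.of_nat (S n)) by lia. reflexivity. Qed.

Lemma pv_pos b n : 0 < pv b n.
Proof. destruct n. rewrite pv_0; lra. rewrite pv_eq by lia. pose proof (c_pos b (Z.of_nat (S n))). pose proof (c_pos b (Z.of_nat (S n) + 1)). lra. Qed.

Section PV.
Variable b : R.
Hypothesis hb : 1 < b < 2.

Lemma c_le1 x : (1 <= x)%Z -> c b x <= 1.
Proof. intros H. unfold c. rewrite Rpower_Ropp. rewrite <- Rinv_1. apply Rinv_le_contravar. lra.
 replace 1 with (Rpower 1 b) at 1. apply Rle_Rpower_l. lra. split. lra. apply IZR_le; lia.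
 unfold Rpower. rewrite ln_1, Rmult_0_r. apply exp_0. Qed.

Lemma c_anti x y : (1 <= x)%Z -> (x <= y)%Z -> c b y <= c b x.
Proof. intros H1 H2. unfold c. rewrite !Rpower_Ropp. apply Rinv_le_contravar. apply Rpower_pos.
 apply Rle_Rpower_l. lra. split. apply IZR_lt; lia. apply IZR_le; lia. Qed.

Lemma pv_le10c n : pv b n <= 10 * c b (Z.of_nat n + 1).
Proof. destruct n. rewrite pv_0. simpl. change (c b 1) with (c b 1). rewrite c_1. lra.
 rewrite pv_eq by lia. pose proof (cL4 b hb (Z.of_nat (S n) + 1) ltac:(lia)).
 replace (Z.of_nat (S n) + 1 - 1)%Z with (Z.of_nat (S n)) in H by lia.
 pose proof (c_pos b (Z.of_nat (S n) + 1)). lra. Qed.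

Lemma pv_le4c n : (1 <= n)%nat -> pv b n <= 4 * c b (Z.of_nat n).
Proof. intros Hn. rewrite pv_eq by lia. pose proof (cL3 b hb (Z.of_nat n + 1) ltac:(lia)).
 replace (Z.of_nat n + 1 - 1)%Z with (Z.of_nat n) in H by lia. lra. Qed.

Lemma pv_ge2c n : 2 * c b (Z.of_nat n + 1) <= pv b n.
Proof. destruct n. rewrite pv_0. simpl. rewrite c_1. lra.
 rewrite pv_eq by lia. pose proof (c_pos b (Z.of_nat (S n))). lra. Qed.

Lemma pv_le4 n : pv b n <= 4.
Proof. destruct n. rewrite pv_0; lra. rewrite pv_eq by lia.
 pose proof (c_le1 (Z.of_nat (S n)) ltac:(lia)). pose proof (c_le1 (Z.of_nat (S n) + 1) ltac:(lia)). lra. Qed.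

End PV.

Lemma sum_const_lower a m K : (forall n, (n <= m)%nat -> K <= a n) -> INR (S m) * K <= sum_f_R0 a m.
Proof. intros H. induction m. simpl. pose proof (H 0%nat (le_n 0)). lra.
 simpl sum_f_R0. rewrite S_INR. rewrite (S_INR m) in IHm.
 assert ((INR m + 1) * K <= sum_f_R0 a m) by (apply IHm; intros; apply H; lia).
 pose proof (H (S m) (le_n _)). rewrite S_INR. lra. Qed.

Lemma Rpower_anti_neg a a' e : 0 < a <= a' -> e <= 0 -> Rpower a' e <= Rpower a e.
Proof. intros Ha He. unfold Rpower. apply exp_le.
 assert (ln a <= ln a'). { destruct (Req_dec a a'). subst; lra. left; apply ln_increasing; lra. }
 nra. Qed.

Lemma IZR_nat1 n : IZR (Z.of_nat n + 1) = INR n + 1.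
Proof. rewrite plus_IZR, <- INR_IZR_INZ. reflexivity. Qed.

Section Sums.
Variable b : R.
Hypothesis hb : 1 < b < 2.

Definition Dt n := 4 / (b - 1) * F b (Z.of_nat n - 1).

Lemma Dt_nonneg n : 0 <= Dt n.
Proof. unfold Dt. apply Rmult_le_pos. apply div_nonneg; lra. left; apply F_pos. Qed.

Lemma pv_tele n : (2 <= n)%nat -> pv b n <= Dt n - Dt (S n).
Proof. intros Hn. pose proof (pv_le4c b hb n ltac:(lia)).
 pose proof (cTail b hb (Z.of_nat n) ltac:(lia)).
 unfold Dt. replace (Z.of_nat (S n) - 1)%Z with (Z.of_nat n) by lia.
 replace (4 / (b - 1) * F b (Z.of_nat n - 1) - 4 / (b - 1) * F b (Z.of_nat n))
   with (4 / (b-1) * (F b (Z.of_nat n - 1) - F b (Z.of_nat n))) by ring.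
 apply Rle_trans with (4 * c b (Z.of_nat n)). exact H.
 apply Rmult_le_reg_l with (b-1). lra.
 replace ((b - 1) * (4 / (b - 1) * (F b (Z.of_nat n - 1) - F b (Z.of_nat n)))) with
   (4 * (F b (Z.of_nat n - 1) - F b (Z.of_nat n))) by (field; lra). lra. Qed.

Lemma pv_sum_bound N : sum_f_R0 (pv b) N <= sum_f_R0 (pv b) 1 + Dt 2.
Proof. apply (bound_tail (pv b) Dt 1). intros; left; apply pv_pos. apply Dt_nonneg.
 intros; apply pv_tele; lia. Qed.

Lemma upper_partial t m k N : (1 <= m)%nat -> (1 <= k)%nat ->
  let R := INR m + 1 in
  sum_f_R0 (fun n => pv b n * stay b t (Z.of_nat n + 1)) N <=
  70 * Rpower R (1 - b) + 70 * (R*R*R) * Bt k ((b-1)/4/(R*R+6)) t + 8/(b-1) * Rpower R (1-b).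
Proof. intros Hm Hk R.
 assert (HR : 2 <= R) by (unfold R; apply (le_INR 1) in Hm; simpl in Hm; lra).
 set (F0 := R*R+6). set (B0 := Bt k ((b-1)/4/F0) t).
 assert (HB0 : 0 <= B0) by (apply Bt_nonneg; auto; apply div_nonneg; unfold F0; nra).
 set (a := fun n => pv b n * stay b t (Z.of_nat n + 1)).
 assert (Ha : forall n, 0 <= a n).
 { intros n. unfold a. apply Rmult_le_pos. left; apply pv_pos. apply stay_bounds. }
 eapply Rle_trans. apply (bound_tail a Dt m Ha Dt_nonneg).
 { intros n Hn. unfold a. eapply Rle_trans. 2: apply pv_tele; lia.
   pose proof (stay_bounds b t (Z.of_nat n + 1)). pose proof (pv_pos b n). nra. }
 apply Rplus_le_compat.
 -
   eapply Rle_trans. apply (sum_const_bound a m (70 * Rpower R (2-b) * (/F0 + B0))).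
   { intros n Hn. unfold a. pose proof (upper_sup b hb F0 k ltac:(unfold F0; nra) Hk t (Z.of_nat n + 1) ltac:(lia)) as U.
     fold B0 in U. unfold fq in U. rewrite IZR_nat1 in U.
     assert (HX : 1 <= INR n + 1) by (pose proof (pos_INR n); lra).
     assert (HXR : INR n + 1 <= R) by (unfold R; apply le_INR in Hn; lra).
     pose proof (cMid b hb (Z.of_nat n + 1) R ltac:(lia) ltac:(rewrite IZR_nat1; lra)) as CM.
     rewrite IZR_nat1 in CM. pose proof (pv_le10c b hb n) as P10.
     pose proof (pv_pos b n). pose proof (c_pos b (Z.of_nat n + 1)).
     assert (HG : 0 <= / F0 + B0) by (assert (0 < /F0) by (apply Rinv_0_lt_compat; unfold F0; nra); lra).
     set (X := INR n + 1) in *. set (cc := c b (Z.of_nat n + 1)) in *.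
     set (G := / F0 + B0) in *. set (st := stay b t (Z.of_nat n + 1)) in *.
     assert (pv b n * (X*X+6) <= 70 * Rpower R (2 - b)).
     { apply Rle_trans with (10 * cc * (7 * (X*X))). apply Rmult_le_compat; nra. nra. }
     apply Rle_trans with (pv b n * ((X * X + 6) * G)). apply Rmult_le_compat_l; lra.
     rewrite <- Rmult_assoc. apply Rmult_le_compat_r; lra. }
   rewrite S_INR. fold R.
   assert (E1 : R * Rpower R (2 - b) = R * R * Rpower R (1-b)).
   { replace (2 - b) with (1 + (1 - b)) by ring. rewrite Rpower_plus, Rpower_1 by lra. ring. }
   assert (E2 : Rpower R (2 - b) <= R * R).
   { replace (R*R) with (Rpower R 2). apply Rle_Rpower; lra.
     replace 2 with (INR 2) by (simpl; lra). rewrite Rpower_pow by lra. simpl; ring. }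
   pose proof (Rpower_pos R (1-b)). pose proof (Rpower_pos R (2-b)).
   assert (HF0 : R * R <= F0) by (unfold F0; lra).
   replace (R * (70 * Rpower R (2 - b) * (/ F0 + B0))) with
     (70 * (R * Rpower R (2-b) * / F0) + 70 * (R * Rpower R (2-b)) * B0) by ring.
   rewrite E1 at 1.
   apply Rplus_le_compat.
   + apply Rmult_le_compat_l. lra.
     apply Rle_trans with (F0 * Rpower R (1 - b) * / F0).
     apply Rmult_le_compat_r. left; apply Rinv_0_lt_compat; unfold F0; nra. nra.
     right. field. unfold F0; nra.
   + apply Rmult_le_compat_r. lra. apply Rmult_le_compat_l. lra.
     replace (R*R*R) with (R * (R*R)) by ring. apply Rmult_le_compat_l; lra.
 -
   unfold Dt. replace (Z.of_nat (S m) - 1)%Z with (Z.of_nat m) by lia.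
   replace (8 / (b - 1) * Rpower R (1 - b)) with (4 / (b-1) * (2 * Rpower R (1-b))) by (field; lra).
   apply Rmult_le_compat_l. apply div_nonneg; lra.
   unfold F. rewrite <- INR_IZR_INZ.
   assert (Hm1 : 1 <= INR m) by (apply (le_INR 1) in Hm; simpl in Hm; lra).
   apply Rle_trans with (Rpower (R * /2) (1 - b)).
   + apply Rpower_anti_neg; [|lra]. split. nra. unfold R. lra.
   + rewrite <- Rpower_mult_distr by lra. rewrite Rmult_comm. apply Rmult_le_compat_r. left; apply Rpower_pos.
     replace (Rpower (/2) (1-b)) with (Rpower 2 (b-1)).
     replace 2 with (Rpower 2 1) at 2 by (apply Rpower_1; lra). apply Rle_Rpower; lra.
     unfold Rpower. f_equal. rewrite ln_Rinv by lra. ring.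
Qed.

Lemma lower_partial t m : 
  4 * (4 * sqrt (INR t) + 1) <= INR m + 2 ->
  (INR m + 1) * c b (2 * Z.of_nat m + 2) <= sum_f_R0 (fun n => pv b n * stay b t (Z.of_nat n + 1)) (S (m+m)).
Proof. intros Hm. set (K := 4 * sqrt (INR t) + 1) in *.
 pose proof (sqrt_pos (INR t)). assert (HK : 1 <= K) by (unfold K; lra).
 assert (HK2 : 16 * INR t <= K*K).
 { unfold K. pose proof (sqrt_sqrt (INR t) (pos_INR t)). nra. }
 set (a := fun n => pv b n * stay b t (Z.of_nat n + 1)).
 assert (Ha : forall n, 0 <= a n).
 { intros n. unfold a. apply Rmult_le_pos. left; apply pv_pos. apply stay_bounds. }
 rewrite sum_split. pose proof (sum_nonneg a m Ha).
 enough ((INR m + 1) * c b (2 * Z.of_nat m + 2) <= sum_f_R0 (fun j => a (S m + j)%nat) m) by lra.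
 rewrite <- S_INR. apply sum_const_lower. intros j Hj. unfold a.
 set (x := (Z.of_nat (S m + j) + 1)%Z).
 assert (Hx : IZR x = INR (S m + j) + 1) by (unfold x; apply IZR_nat1).
 assert (Hx1 : INR m + 2 <= IZR x) by (rewrite Hx, plus_INR, S_INR; pose proof (pos_INR j); lra).
 pose proof (lower_sup b hb K HK t x ltac:(unfold x; lia)) as LS.
 assert (K / IZR x <= /4).
 { apply Rmult_le_reg_r with (IZR x). lra. unfold Rdiv. rewrite Rmult_assoc, Rinv_l by lra. lra. }
 assert (4 * INR t / (K*K) <= /4).
 { apply Rmult_le_reg_r with (K*K). nra. unfold Rdiv. rewrite Rmult_assoc, Rinv_l by nra. lra. }
 assert (Hs : /2 <= stay b t x) by lra.
 pose proof (pv_ge2c b (S m + j)). fold x in H3.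
 pose proof (c_anti b hb x (2 * Z.of_nat m + 2) ltac:(unfold x; lia) ltac:(unfold x; lia)).
 pose proof (c_pos b (2 * Z.of_nat m + 2)). pose proof (pv_pos b (S m + j)). nra.
Qed.

End Sums.

Lemma Rpower_sq x e : Rpower x e * Rpower x e = Rpower x (2*e).
Proof. rewrite <- Rpower_plus. f_equal. ring. Qed.

Lemma Rpower_powk x e k : 0 < x -> (Rpower x e) ^ k = Rpower x (e * INR k).
Proof. intros Hx. rewrite <- Rpower_pow by apply Rpower_pos. apply Rpower_mult. Qed.

Lemma lower_final b (hb : 1 < b < 2) t : 1 <= INR t -> exists N,
  / 80 * Rpower (INR t) ((1 - b)/2) <= sum_f_R0 (fun n => pv b n * stay b t (Z.of_nat n + 1)) N.
Proof. intros Ht.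
 set (K := 4 * sqrt (INR t) + 1).
 assert (Hs1 : 1 <= sqrt (INR t)) by (rewrite <- sqrt_1; apply sqrt_le_1_alt; lra).
 destruct (floor_ex (4*K - 2)) as [m0 [Hm1 Hm2]]. unfold K; lra.
 set (m := S m0). assert (Hm3 : INR m = INR m0 + 1) by (unfold m; apply S_INR).
 exists (S (m+m)). eapply Rle_trans; [|apply lower_partial; auto; fold K; lra].
 unfold c. replace (IZR (2 * Z.of_nat m + 2)) with (2 * INR m + 2).
 2:{ rewrite plus_IZR, mult_IZR, <- INR_IZR_INZ. reflexivity. }
 assert (HM : 0 <= INR m) by apply pos_INR.
 replace ((INR m + 1) * Rpower (2 * INR m + 2) (- b)) with (/2 * Rpower (2 * INR m + 2) (1 - b)).
 2:{ replace (1 - b) with (1 + - b) by ring. rewrite Rpower_plus, Rpower_1 by lra. field. }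
 assert (Hle : Rpower (40 * sqrt (INR t)) (1 - b) <= Rpower (2 * INR m + 2) (1 - b)).
 { apply Rpower_anti_neg; [|lra]. split. lra. unfold K in Hm1. lra. }
 rewrite <- Rpower_mult_distr in Hle by lra.
 rewrite <- Rpower_sqrt in Hle by lra. rewrite Rpower_mult in Hle.
 replace (/ 2 * (1 - b)) with ((1-b)/2) in Hle by field.
 assert (H40 : /40 <= Rpower 40 (1 - b)).
 { replace (1 - b) with (- (b - 1)) by ring. rewrite Rpower_Ropp. apply Rinv_le_contravar. apply Rpower_pos.
   replace 40 with (Rpower 40 1) at 2 by (apply Rpower_1; lra). apply Rle_Rpower; lra. }
 pose proof (Rpower_pos (INR t) ((1-b)/2)). nra.
Qed.

Lemma Bt_le k eta t : (1 <= k)%nat -> 0 < eta -> 1 <= INR t ->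
  Bt k eta t <= /7 * (INR k / (eta * INR t)) ^ k.
Proof. intros Hk He Ht. unfold Bt. apply Rmult_le_compat_l. lra. apply pow_incr.
 assert (1 <= INR k) by (apply (le_INR 1); auto). split. apply div_nonneg; nra.
 unfold Rdiv. apply Rmult_le_compat_l. lra. apply Rinv_le_contravar; nra. Qed.

Definition Cup b k := 140 + 16/(b-1) + 10 * (28 * INR k / (b-1)) ^ k.

Lemma upper_final b (hb : 1 < b < 2) k t : (4 <= k)%nat -> 1 <= INR t ->
  2 <= Rpower (INR t) (1/2 - 3/(2 * INR k)) ->
  forall N, sum_f_R0 (fun n => pv b n * stay b t (Z.of_nat n + 1)) N <=
    Cup b k * Rpower (INR t) ((1 - b)/2 + 3/(2 * INR k)).
Proof. intros Hk Ht Hw N.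
 assert (HK : 4 <= INR k) by (apply (le_INR 4) in Hk; simpl in Hk; lra).
 set (d := 3/(2 * INR k)) in *. set (th := 1/2 - d) in *.
 assert (Hd : 0 < d <= 3/8).
 { unfold d. split. apply Rdiv_lt_0_compat; lra. apply Rmult_le_reg_r with (2 * INR k). lra.
   unfold Rdiv. rewrite Rmult_assoc, Rinv_l by lra. nra. }
 set (w := Rpower (INR t) th) in *.
 destruct (floor_ex (w - 1)) as [m [Hm1 Hm2]]. lra.
 assert (Hm : (1 <= m)%nat).
 { destruct m. change (INR 0) with 0 in Hm2. lra. lia. }
 pose proof (upper_partial b hb t m k N Hm ltac:(lia)) as UP. simpl in UP.
 set (R := INR m + 1) in *.
 assert (HR : 2 <= R) by (unfold R; apply (le_INR 1) in Hm; simpl in Hm; lra).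
 assert (ER : R = INR m + 1) by reflexivity. assert (HRw : R <= w) by lra.
 assert (HRw2 : w <= 2 * R) by lra.
 set (s := b - 1).
 assert (HA : Rpower R (1 - b) <= 2 * Rpower (INR t) ((1 - b)/2 + d)).
 { apply Rle_trans with (Rpower (w * /2) (1 - b)).
   apply Rpower_anti_neg; lra.
   rewrite <- Rpower_mult_distr by lra. unfold w. rewrite Rpower_mult.
   replace (Rpower (/2) (1-b)) with (Rpower 2 (b-1)).
   2:{ unfold Rpower. f_equal. rewrite ln_Rinv by lra. ring. }
   assert (Rpower 2 (b-1) <= 2).
   { replace 2 with (Rpower 2 1) at 2 by (apply Rpower_1; lra). apply Rle_Rpower; lra. }
   assert (Rpower (INR t) (th * (1 - b)) <= Rpower (INR t) ((1 - b) / 2 + d)).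
   { apply Rle_Rpower. lra. unfold th. nra. }
   pose proof (Rpower_pos (INR t) (th * (1-b))). pose proof (Rpower_pos 2 (b-1)). nra. }
 set (eta := (b - 1) / 4 / (R * R + 6)).
 assert (Heta : 0 < eta) by (unfold eta; apply Rdiv_lt_0_compat; [lra|nra]).
 pose proof (Bt_le k eta t ltac:(lia) Heta Ht) as HB.
 assert (Hq : INR k / (eta * INR t) <= 28 * INR k / s * Rpower (INR t) (- (2 * d))).
 { assert (Hw2 : R * R <= Rpower (INR t) (2 * th)).
   { rewrite <- Rpower_sq. fold w. nra. }
   assert (E : Rpower (INR t) (- (2*d)) = Rpower (INR t) (2*th) * / INR t).
   { replace (- (2*d)) with (2*th + - (1)) by (unfold th; field). rewrite Rpower_plus, Rpower_Ropp, Rpower_1 by lra. reflexivity. }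
   rewrite E. unfold eta.
   replace (INR k / ((b - 1) / 4 / (R * R + 6) * INR t)) with (4 * INR k / s * (R*R+6) * / INR t)
     by (unfold s; field; repeat split; nra).
   assert (0 < / INR t) by (apply Rinv_0_lt_compat; lra).
   assert (0 < 4 * INR k / s) by (unfold s; apply Rdiv_lt_0_compat; lra).
   replace (28 * INR k / s) with (7 * (4 * INR k / s)) by (unfold s; field; lra).
   assert (R*R+6 <= 7 * Rpower (INR t) (2*th)) by nra.
   apply Rle_trans with (4 * INR k / s * (7 * Rpower (INR t) (2*th)) * / INR t).
   apply Rmult_le_compat_r. lra. apply Rmult_le_compat_l; lra. right; ring. }
 assert (HBt : 70 * (R * R * R) * Bt k eta t <= 10 * (28 * INR k / s) ^ k * Rpower (INR t) ((1 - b)/2 + d)).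
 { assert (HR3 : R * R * R <= Rpower (INR t) (3 * th)).
   { replace (3 * th) with (th + th + th) by ring. rewrite !Rpower_plus. fold w.
     assert (R*R <= w*w) by nra. nra. }
   assert (Hpow : (INR k / (eta * INR t)) ^ k <= (28 * INR k / s) ^ k * Rpower (INR t) (- 3)).
   { eapply Rle_trans. apply pow_incr. split. apply div_nonneg. pose proof (pos_INR k); lra. nra. exact Hq.
     rewrite Rpow_mult_distr. apply Rmult_le_compat_l. apply pow_le. unfold s; apply div_nonneg; lra.
     rewrite Rpower_powk by lra. right. f_equal. unfold d. field. lra. }
   assert (HBk : 0 <= Bt k eta t) by (apply Bt_nonneg; lia || lra).
   assert (0 <= (28 * INR k / s) ^ k) by (apply pow_le; unfold s; apply div_nonneg; lra).
   apply Rle_trans with (70 * Rpower (INR t) (3 * th) * (/7 * ((28 * INR k / s) ^ k * Rpower (INR t) (-3)))).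
   { apply Rmult_le_compat. nra. exact HBk. nra. eapply Rle_trans. exact HB.
     apply Rmult_le_compat_l; lra. }
   replace (70 * Rpower (INR t) (3 * th) * (/ 7 * ((28 * INR k / s) ^ k * Rpower (INR t) (-3))))
     with (10 * (28 * INR k / s) ^ k * (Rpower (INR t) (3 * th) * Rpower (INR t) (-3))) by field.
   rewrite <- Rpower_plus. apply Rmult_le_compat_l. nra.
   apply Rle_Rpower. lra. unfold th. lra. }
 eapply Rle_trans. exact UP. fold eta. unfold Cup. fold s.
 assert (0 <= 8 / s) by (unfold s; apply div_nonneg; lra).
 replace ((140 + 16 / s + 10 * (28 * INR k / s) ^ k) * Rpower (INR t) ((1 - b) / 2 + d))
   with (70 * (2 * Rpower (INR t) ((1 - b) / 2 + d)) + 10 * (28 * INR k / s) ^ k * Rpower (INR t) ((1 - b) / 2 + d)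
        + 8/s * (2 * Rpower (INR t) ((1 - b) / 2 + d))) by (unfold s; field; lra).
 apply Rplus_le_compat. apply Rplus_le_compat. apply Rmult_le_compat_l; lra. exact HBt.
 apply Rmult_le_compat_l; lra.
Qed.

Lemma sum_divZ (f g : nat -> R) Z N :
  sum_f_R0 (fun n => f n / Z * g n) N = / Z * sum_f_R0 (fun n => f n * g n) N.
Proof. induction N; simpl. unfold Rdiv; ring. rewrite IHN. unfold Rdiv; ring. Qed.

Lemma stay0_pos n b : stay b 0 (Z.of_nat n + 1) = 1.
Proof. simpl. unfold inC. replace ((1 <=? Z.of_nat n + 1)%Z) with true by (symmetry; apply Z.leb_le; lia). reflexivity. Qed.

Theorem mainTheorem6 (beta : R) (hb : 1 < beta < 2) :
  exists (Ztot : R) (P : nat -> R),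
    infinite_sum (pi_pair beta) Ztot /\ 0 < Ztot /\
    (forall t : nat,
       infinite_sum
         (fun n : nat => piw beta (Z.of_nat n + 1)%Z / Ztot
                         * stay beta t (Z.of_nat n + 1)%Z) (P t)) /\
    P 0%nat = 1/2 /\
    (forall eps : R, 0 < eps ->
       exists T : nat, forall t : nat, (1 <= t)%nat -> (T <= t)%nat ->
         Rpower (INR t) ((1 - beta) / 2 - eps) <= P t <=
         Rpower (INR t) ((1 - beta) / 2 + eps)).
Proof.
 set (b := beta).
 assert (Hg : Un_growing (sum_f_R0 (pv b))).
 { intros n. simpl. pose proof (pv_pos b (S n)). lra. }
 assert (Hub : has_ub (sum_f_R0 (pv b))).
 { exists (sum_f_R0 (pv b) 1 + Dt b 2). intros x [i ->]. apply (pv_sum_bound b hb). }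
 destruct (growing_cv _ Hg Hub) as [Sp HSp].
 assert (HSp2 : 2 <= Sp).
 { pose proof (lim_ge _ Sp 0 HSp Hg). simpl in H. rewrite pv_0 in H. exact H. }
 set (Z := 2 * Sp).
 assert (HZ : 0 < Z) by (unfold Z; lra).
 set (term := fun t n => piw b (Z.of_nat n + 1) / Z * stay b t (Z.of_nat n + 1)).
 assert (Hsum : forall t N, sum_f_R0 (term t) N = / Z * sum_f_R0 (fun n => pv b n * stay b t (Z.of_nat n + 1)) N).
 { intros t N. unfold term. apply (sum_divZ (pv b) (fun n => stay b t (Z.of_nat n + 1)) Z N). }
 assert (Hgt : forall t, Un_growing (sum_f_R0 (term t))).
 { intros t n. simpl. unfold term. pose proof (stay_bounds b t (Z.of_nat (S n) + 1)).
   pose proof (pv_pos b (S n)). unfold pv in H0.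
   assert (0 <= piw b (Z.of_nat (S n) + 1) / Z) by (apply div_nonneg; lra). nra. }
 assert (Hbt : forall t, has_ub (sum_f_R0 (term t))).
 { intros t. exists (/ Z * (sum_f_R0 (pv b) 1 + Dt b 2)). intros x [i ->]. rewrite Hsum.
   apply Rmult_le_compat_l. left; apply Rinv_0_lt_compat; lra.
   eapply Rle_trans; [|apply (pv_sum_bound b hb i)]. apply sum_Rle. intros n _.
   pose proof (stay_bounds b t (Z.of_nat n + 1)). pose proof (pv_pos b n). nra. }
 set (P := fun t => proj1_sig (growing_cv _ (Hgt t) (Hbt t))).
 assert (HP : forall t, Un_cv (sum_f_R0 (term t)) (P t)).
 { intros t. unfold P. destruct (growing_cv _ (Hgt t) (Hbt t)) as [l Hl]. exact Hl. }
 exists Z, P. split; [|split; [exact HZ|split; [|split]]].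
 -
   assert (E : forall N, sum_f_R0 (pi_pair b) N = 2 * sum_f_R0 (pv b) N).
   { assert (Hpp : forall n, pi_pair b n = 2 * pv b n).
     { intros n. unfold pi_pair. rewrite piw_neg_pv. unfold pv. ring. }
     intros N. induction N.
     - simpl. apply Hpp.
     - change (sum_f_R0 (pi_pair b) (S N)) with (sum_f_R0 (pi_pair b) N + pi_pair b (S N)).
       change (sum_f_R0 (pv b) (S N)) with (sum_f_R0 (pv b) N + pv b (S N)).
       rewrite IHN, Hpp. ring. }
   intros e He. destruct (cv_scal _ _ 2 HSp e He) as [N HN]. exists N. intros n Hn.
   rewrite E. apply HN; auto.
 - intros t. apply HP.
 -
   apply (UL_sequence (sum_f_R0 (term 0%nat))). apply HP.
   assert (E : forall N, sum_f_R0 (term 0%nat) N = / Z * sum_f_R0 (pv b) N).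
   { intros N. rewrite Hsum. f_equal. apply sum_eq. intros i _. rewrite stay0_pos. ring. }
   replace (1/2) with (/ Z * Sp) by (unfold Z; field; lra).
   intros e He. destruct (cv_scal _ _ (/ Z) HSp e He) as [N HN]. exists N. intros n Hn.
   rewrite E. apply HN; auto.
 - intros eps Heps. set (a := (1 - b)/2).
   destruct (Rpower_big (80 * Z) eps Heps) as [T1 HT1].
   destruct (INR_unbounded (3/eps + 4)) as [k Hk].
   assert (Hk4 : (4 <= k)%nat).
   { destruct (le_lt_dec 4 k); auto. apply lt_INR in l. simpl in l.
     assert (0 < 3/eps) by (apply Rdiv_lt_0_compat; lra). lra. }
   assert (HK : 4 <= INR k) by (apply (le_INR 4) in Hk4; simpl in Hk4; lra).
   set (d := 3 / (2 * INR k)).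
   assert (Hd : 0 < d <= eps / 2).
   { unfold d. split. apply Rdiv_lt_0_compat; lra.
     assert (3 <= eps * INR k).
     { assert (3/eps < INR k) by lra. apply Rmult_lt_compat_l with (r := eps) in H; [|lra].
       replace (eps * (3/eps)) with 3 in H by (field; lra). lra. }
     apply Rmult_le_reg_r with (2 * INR k). lra. unfold Rdiv. rewrite Rmult_assoc, Rinv_l by lra. nra. }
   assert (Hd2 : d <= 3/8).
   { unfold d. apply Rmult_le_reg_r with (2 * INR k). lra. unfold Rdiv. rewrite Rmult_assoc, Rinv_l by lra. nra. }
   destruct (Rpower_big 2 (1/2 - d) ltac:(lra)) as [T2 HT2].
   destruct (Rpower_big (Cup b k / Z) (eps/2) ltac:(lra)) as [T3 HT3].
   exists (max T1 (max T2 T3)). intros t Ht1 HtT.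
   assert (Ht : 1 <= INR t) by (apply (le_INR 1) in Ht1; simpl in Ht1; lra).
   pose proof (HT1 t ltac:(lia)) as H1. pose proof (HT2 t ltac:(lia)) as H2. pose proof (HT3 t ltac:(lia)) as H3.
   split.
   + destruct (lower_final b hb t Ht) as [N HN].
     eapply Rle_trans; [|apply (lim_ge _ (P t) N (HP t) (Hgt t))]. rewrite Hsum.
     fold a in HN.
     replace (a - eps) with (a + - eps) by ring. rewrite Rpower_plus, Rpower_Ropp.
     pose proof (Rpower_pos (INR t) a). pose proof (Rpower_pos (INR t) eps).
     assert (/ Rpower (INR t) eps <= / (80 * Z)) by (apply Rinv_le_contravar; lra).
     apply Rle_trans with (Rpower (INR t) a * / (80 * Z)). apply Rmult_le_compat_l; lra.
     replace (Rpower (INR t) a * / (80 * Z)) with (/ Z * (/ 80 * Rpower (INR t) a)) by (field; lra).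
     apply Rmult_le_compat_l. left; apply Rinv_0_lt_compat; lra. exact HN.
   + apply (lim_le _ _ _ (HP t)). intros N. rewrite Hsum.
     pose proof (upper_final b hb k t Hk4 Ht H2 N) as U. fold d a in U.
     pose proof (Rpower_pos (INR t) (a + d)).
     assert (Ee : Rpower (INR t) (a + eps) = Rpower (INR t) (a + d) * Rpower (INR t) (eps - d)).
     { rewrite <- Rpower_plus. f_equal. ring. }
     assert (Rpower (INR t) (eps/2) <= Rpower (INR t) (eps - d)) by (apply Rle_Rpower; lra).
     rewrite Ee. apply Rle_trans with (/ Z * (Cup b k * Rpower (INR t) (a + d))).
     apply Rmult_le_compat_l. left; apply Rinv_0_lt_compat; lra. exact U.
     replace (/ Z * (Cup b k * Rpower (INR t) (a + d))) with (Rpower (INR t) (a + d) * (Cup b k / Z)) by (field; lra).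
     apply Rmult_le_compat_l; lra.
Qed.
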